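(* Let $P$ be a finite poset, $\phi:P\to\mathbb{N}$ an isotone map and $\mathcal{J}(\phi)=\{\psi\in\mathrm{Hom}(P,\mathbb{N}):\psi\le\phi\}$. The inclusion-minimal elements of the family of sets $\{\Lambda\psi : \psi\in\mathrm{Hom}(P,\mathbb{N}),\ \psi\notin\mathcal{J}(\phi)\}$ are exactly the sets $\{(p_0,0),(p_1,1),\dots,(p_r,r)\}$ where $p_0\le p_1\le\dots\le p_r$ is a multichain in $P$, $\phi(p_r)=r$, and $\phi(p_i)>i$ for all $i<r$.
   Context: $\mathbb{N}=\{0,1,2,\dots\}$; $\mathrm{Hom}(P,\mathbb{N})$ is the set of isotone maps $P\to\mathbb{N}$, ordered by $\psi\le\phi$ iff $\psi(p)\le\phi(p)$ for all $p$. The ascent of $\psi$ is $\Lambda\psi=\{(p,i)\in P\times\mathbb{N}: \psi(q)\le i<\psi(p)\text{ for all } q<p\}$. *)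

(* Defs.v *)
From mathcomp Require Import all_boot all_order.
Set Implicit Arguments. Unset Strict Implicit. Unset Printing Implicit Defensive.
Import Order.TTheory.

Section AscentDefs.
Context {d : Order.disp_t} {P : porderType d}.

Definition isotone (f : P -> nat) : Prop :=
  forall x y : P, (x <= y)%O -> (f x <= f y)%N.

Definition fle (psi phi : P -> nat) : Prop := forall p : P, (psi p <= phi p)%N.

Definition ascent (psi : P -> nat) : P * nat -> Prop :=
  fun x => (forall q : P, (q < x.1)%O -> (psi q <= x.2)%N) /\ (x.2 < psi x.1)%N.

Definition ascent_family (phi : P -> nat) (S : P * nat -> Prop) : Prop :=
  exists psi : P -> nat, isotone psi /\ ~ fle psi phi /\ S = ascent psi.

Definition minimal_in (F : (P * nat -> Prop) -> Prop) (S : P * nat -> Prop) : Prop :=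
  F S /\ forall T, F T -> (forall x, T x -> S x) -> T = S.

End AscentDefs.

(* Main.v *)
Require Import Defs.
From mathcomp Require Import all_boot all_order.
From mathcomp Require Import zify.
From Stdlib Require Import Lia Classical FunctionalExtensionality PropExtensionality.
Set Implicit Arguments. Unset Strict Implicit. Unset Printing Implicit Defensive.
Import Order.TTheory.
Local Open Scope order_scope.

Section S.
Context {d : Order.disp_t} {P : finPOrderType d}.

Lemma card_lt (q x : P) : q < x -> (#|[set z | (z < q)%O]| < #|[set z | (z < x)%O]|)%N.
Proof.
move=> qx; apply: proper_card; apply/properP; split.
  by apply/subsetP=> z; rewrite !inE => zq; exact: lt_trans zq qx.
by exists q; rewrite !inE ?ltxx.
Qed.

Lemma exists_asc (psi : P -> nat) x0 i : (i < psi x0)%N ->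
  exists y, y <= x0 /\ ascent psi (y, i).
Proof.
suff H : forall n (x : P), (#|[set z | (z < x)%O]| < n)%N -> (i < psi x)%N ->
  exists y, y <= x /\ ascent psi (y, i) by apply: H.
elim=> [|n IH] x Hn Hi; first by rewrite ltn0 in Hn.
case: (classic (forall q, q < x -> (psi q <= i)%N)) => H.
  by exists x; split => //; split.
have [q Hq] := not_all_ex_not _ _ H.
have [qx iq'] := imply_to_and _ _ Hq.
have iq : (i < psi q)%N by rewrite ltnNge; apply/negP.
have [y [yq ay]] := IH q (leq_trans (card_lt qx) Hn) iq.
by exists y; split => //; apply: le_trans yq (ltW qx).
Qed.

Definition chainset (r : nat) (p : nat -> P) : P * nat -> Prop :=
  fun x => exists2 i, (i <= r)%N & x = (p i, i).

Definition good (phi : P -> nat) r (p : nat -> P) :=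
    (forall i, (i < r)%N -> p i <= p i.+1) /\
    phi (p r) = r /\
    (forall i, (i < r)%N -> (i < phi (p i))%N).

Lemma chain_mono r (p : nat -> P) : (forall i, (i < r)%N -> p i <= p i.+1) ->
  forall i j, (i <= j <= r)%N -> p i <= p j.
Proof.
move=> H i j /andP[ij jr]; elim: j ij jr => [|j IH]; first by rewrite leqn0 => /eqP->.
rewrite leq_eqVlt => /orP[/eqP->//|]; rewrite ltnS => ij jr.
apply: le_trans (IH ij (ltnW jr)) (H _ jr).
Qed.

Definition psiC r (p : nat -> P) (q : P) : nat := \max_(i < r.+1 | p i <= q) i.+1.

Lemma psiC_key r p (H : forall i, (i < r)%N -> p i <= p i.+1) q i :
  (i <= r)%N -> (i < psiC r p q)%N = (p i <= q)%O.
Proof.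
move=> ir; apply/idP/idP.
  apply: contraLR => nle; rewrite -leqNgt; apply/bigmax_leqP => j pj.
  rewrite ltnNge; apply: contra nle => ij.
  apply: le_trans pj; apply: (chain_mono H); rewrite ij /=; exact: (ltn_ord j).
move=> piq; exact: (leq_bigmax_cond (Ordinal (ir : (i < r.+1)%N)) piq).
Qed.

Lemma psiC_bound r p q : (psiC r p q <= r.+1)%N.
Proof. by apply/bigmax_leqP => j _; exact: ltn_ord j. Qed.

Lemma psiC_iso r p : isotone (psiC r p).
Proof.
move=> x y xy; apply/bigmax_leqP => j pj.
exact: (leq_bigmax_cond j (le_trans pj xy)).
Qed.

Lemma good_in phi r p : good phi r p -> ascent_family phi (chainset r p).
Proof.
move=> [H [Hr Hlt]]; exists (psiC r p); split; first exact: psiC_iso.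
split.
  move=> /(_ (p r)); rewrite Hr; apply/negP; rewrite -ltnNge (psiC_key H) //.
apply: functional_extensionality => -[q j]; apply: propositional_extensionality.
split.
  move=> [i ir [-> ->]]; split => /=; last by rewrite (psiC_key H).
  move=> q' q'lt; rewrite leqNgt; apply/negP; rewrite (psiC_key H) // => /(lt_le_trans q'lt).
  by rewrite ltxx.
move=> [/= Hq Hj].
have jr : (j <= r)%N by rewrite -ltnS; exact: leq_trans Hj (psiC_bound _ _ _).
exists j => //; congr pair.
have pjq : p j <= q by rewrite -(psiC_key H).
case: (eqVneq (p j) q) => // ne.
have : p j < q by rewrite lt_neqAle ne pjq.
by move=> /Hq; rewrite leqNgt (psiC_key H) // lexx.
Qed.


Definition asc_b (psi : P -> nat) (y : P) (i : nat) : bool :=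
  [forall q, (q < y)%O ==> (psi q <= i)%N] && (i < psi y)%N.

Lemma asc_bP psi y i : asc_b psi y i -> ascent psi (y, i).
Proof.
case/andP => /forallP H Hi; split => //= q qy.
exact: (implyP (H q) qy).
Qed.

Definition fdown psi (i : nat) (x : P) : P :=
  odflt x [pick y | (y <= x)%O && asc_b psi y i].

Lemma fdownP psi i x : (i < psi x)%N -> fdown psi i x <= x /\ ascent psi (fdown psi i x, i).
Proof.
move=> Hi; rewrite /fdown; case: pickP => [y /andP [yx /asc_bP]|] //=.
have [y [yx [H1 H2]]] := exists_asc Hi.
move=> /(_ y); rewrite yx /=; move/negP; case; apply/andP; split => //.
by apply/forallP => q; apply/implyP => /H1.
Qed.

Lemma extract phi (hphi : isotone phi) psi : ~ fle psi phi ->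
  exists r p, good phi r p /\ forall x, chainset r p x -> ascent psi x.
Proof.
move=> /not_all_ex_not [a0 /negP]; rewrite -ltnNge => Ha0.
case: (@arg_minnP _ a0 (fun x => (phi x < psi x)%N) phi Ha0) => a Ha Hmin.
set r := phi a.
pose q := fix q m := if m is m'.+1 then fdown psi (r - m) (q m') else fdown psi r a.
have qP : forall m, (m <= r)%N -> ascent psi (q m, r - m).
  elim => [_|m IH] /=; first by rewrite subn0; exact: (fdownP (leq_trans Ha (leqnn _))).2.
  move=> mr; have [_ H2] := IH (ltnW mr).
  apply: (fdownP _).2; apply: leq_ltn_trans H2; apply: leq_sub2l; exact: leqnSn.
pose p i := q (r - i).
have pA : forall i, (i <= r)%N -> ascent psi (p i, i).
  by move=> i ir; have := qP (r - i) (leq_subr _ _); rewrite subKn.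
have pS : forall i, (i < r)%N -> p i = fdown psi i (p i.+1).
  move=> i ir; rewrite /p; have -> : (r - i = (r - i.+1).+1)%N by rewrite subnSK.
  change (fdown psi (r - (r - i.+1).+1) (q (r - i.+1)) = fdown psi i (q (r - i.+1))).
  by have -> : (r - (r - i.+1).+1 = i)%N by lia.
have pr : p r <= a by rewrite /p subnn; exact: (fdownP Ha).1.
have ch : forall i, (i < r)%N -> p i <= p i.+1.
  move=> i ir; rewrite (pS i ir); apply: (fdownP _).1; exact: ltnW (pA _ ir).2.
exists r, p; split; last by move=> x [i ir ->]; exact: pA.
split => //; split.
  apply/eqP; rewrite eqn_leq hphi //= leqNgt; apply/negP => lt.
  have := Hmin (p r); rewrite (leq_trans lt) ?ltnn //; last first.
    exact: (leq_trans _ (pA r (leqnn r)).2).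
  by move/(_ isT); rewrite leqNgt lt.
move=> i ir; rewrite ltnNge; apply/negP => le.
have := Hmin (p i); rewrite (leq_ltn_trans le (pA i (ltnW ir)).2) => /(_ isT).
by rewrite leqNgt (leq_ltn_trans le ir).
Qed.

Lemma incomp phi s q r p : good phi s q -> good phi r p ->
  (forall x, chainset s q x -> chainset r p x) -> forall x, chainset r p x -> chainset s q x.
Proof.
move=> [_ [Hs _]] [_ [_ Hr]] sub.
have Hj : forall j, (j <= s)%N -> (j <= r)%N /\ q j = p j.
  move=> j js; have [i ir [E1 E2]] := sub (q j, j) (ex_intro2 _ _ j js erefl).
  by subst i; split.
have [sr qs] := Hj s (leqnn s).
have esr : s = r.
  apply/eqP; rewrite eqn_leq sr /= leqNgt; apply/negP => lt.
  by have := Hr s lt; rewrite -qs Hs ltnn.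
subst s => x [i ir ->]; exists i => //; by rewrite (Hj i ir).2.
Qed.

End S.

Unset Implicit Arguments.
Local Close Scope order_scope.

Theorem proposition4p12 (d : Order.disp_t) (P : finPOrderType d)
  (phi : P -> nat) (hphi : isotone phi) (S : P * nat -> Prop) :
  minimal_in (ascent_family phi) S <->
  exists (r : nat) (p : nat -> P),
    (forall i, (i < r)%N -> (p i <= p i.+1)%O) /\
    phi (p r) = r /\
    (forall i, (i < r)%N -> (i < phi (p i))%N) /\
    S = (fun x => exists2 i, (i <= r)%N & x = (p i, i)).
Proof.
split.
  move=> [[psi [iso [nf ->]]] Hmin].
  have [r [p [g sub]]] := extract hphi nf.
  have E := Hmin _ (good_in g) sub.
  exists r, p; move: g => [g1 [g2 g3]]; do !split => //.
move=> [r [p [H1 [H2 [H3 ->]]]]].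
have g : good phi r p by [].
split; first exact: good_in g.
move=> T [psi [iso [nf ->]]] sub.
have [s [q [g' sub']]] := extract hphi nf.
have := incomp g' g (fun x h => sub x (sub' x h)) => back.
apply: functional_extensionality => x; apply: propositional_extensionality.
split; [exact: sub | move=> /back; exact: sub'].
Qed.
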